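(* Assume [LJ1]–[LJ4] and additionally that $$R(t):=J_2\Big(\frac{\gamma+t}{2}\Big)+\frac12\big(J_1(\gamma)+J_1(t)\big)-J_0(\gamma)-\frac32\big(J_{CB}(t)-J_0(\gamma)\big)\le0\quad\text{for all }t\in\operatorname{dom}J_1.$$ Then $B_{IF}(m)=B(\gamma)$ for every $m\in\{1,2,\dots\}\cup\{+\infty\}$, and $B_{AIF}(n)=B_{IJ}$ for every $n\in\{2,3,\dots\}\cup\{+\infty\}$.
   Context: Potentials: $J_1,J_2:\mathbb R\to(-\infty,+\infty]$; $J_{CB}:=J_1+J_2$; $J_0(z):=J_2(z)+\frac12\inf\{J_1(z_1)+J_1(z_2):z_1+z_2=2z\}$; $J_0^{**}$ is the convex lower semicontinuous envelope of $J_0$. Hypotheses: [LJ1] $\{z:J_0(z)=J_0^{**}(z)\}\cap\{z:J_0\text{ is affine in a neighbourhood of }z\}=\emptyset$. [LJ2] for every $z$ with $J_0(z)=J_0^{**}(z)$, the set $\{(z_1,z_2):z_1+z_2=2z,\ J_0(z)=J_2(z)+\frac12(J_1(z_1)+J_1(z_2))\}$ has exactly one element. [LJ3] $J_1,J_2$ are $C^{1,\alpha}$ on their domains for some $0<\alpha\le1$, $J_0$ is $C^1$ on its domain, $\operatorname{dom}J_1=\operatorname{dom}J_2\supset(0,+\infty)$, $\lim_{z\to+\infty}J_j(z)=0$ ($j=1,2$) and $\lim_{z\to+\infty}J_0(z)=:J_0(+\infty)\in\mathbb R$. [LJ4] there is a convex $\Psi:\mathbb R\to[0,+\infty]$ with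 $\lim_{z\to-\infty}\Psi(z)/|z|=+\infty$ and constants $c_1,c_2>0$ with $c_1(\Psi(z)-1)\le J_j(z)\le c_2\max\{\Psi(z),|z|\}$ for all $z\in\mathbb R$, $j=1,2$; there are $\delta_1,\delta_2,\gamma>0$ with $\{\delta_j\}=\operatorname{argmin}J_j$ and $\{\gamma\}=\operatorname{argmin}J_0$; $J_j$ is strictly convex on $(-\infty,\delta_j)\cap\operatorname{dom}J_j$; $J_0(\gamma)<J_0(+\infty)$; and $J_0(z)=J_0^{**}(z)$ for all $z\le\gamma$. Boundary layer energies (with $\mathbb N=\{0,1,2,\dots\}$): $B(\gamma):=\inf_{N\in\mathbb N}\min\{\frac12J_1(v^1-v^0)+\sum_{i\ge0}[J_2(\frac{v^{i+2}-v^i}{2})+\frac12J_1(v^{i+2}-v^{i+1})+\frac12J_1(v^{i+1}-v^i)-J_0(\gamma)]:v:\mathbb N\to\mathbb R,\ v^0=0,\ v^{i+1}-v^i=\gamma\ \forall i\ge N\}$; for $m\in\mathbb N$, $B_{IF}(m):=\inf_{k\in\mathbb N}\min\{\frac12J_1(v^1-v^0)+\sum_{i=0}^{k-1}[J_2(\frac{v^{i+2}-v^i}{2})+\frac12J_1(v^{i+2}-v^{i+1})+\frac12J_1(v^{i+1}-v^i)-J_0(\gamma)]+\frac{2m+1}{2}(J_{CB}(v^{k+1}-v^k)-J_0(\gamma)):v:\mathbb N\to\mathbb R,\ v^0=0\}$, and $B_{IF}(+\infty):=B(\gamma)$; $B_{IJ}:=2B(\gamma)-2J_0(\gamma)$;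 for $n\in\{1,2,\dots\}\cup\{+\infty\}$, $B_{AIF}(n):=B_{IF}(n-1)+B(\gamma)-2J_0(\gamma)$ (with $+\infty-1=+\infty$). *)

(* Defs.v *)
From Stdlib Require Import Reals Lra ClassicalEpsilon.
Open Scope R_scope.

Inductive Rbar : Type := Finite (r : R) | p_infty | m_infty.

Definition Rbar_le (x y : Rbar) : Prop :=
  match x, y with
  | m_infty, _ => True
  | _, p_infty => True
  | Finite a, Finite b => a <= b
  | _, _ => False
  end.

Definition Rbar_lt (x y : Rbar) : Prop :=
  match x, y with
  | m_infty, m_infty => False
  | m_infty, _ => True
  | p_infty, _ => False
  | Finite _, p_infty => True
  | Finite a, Finite b => a < b
  | Finite _, m_infty => False
  end.

(* addition; the undetermined case +oo + -oo is set to 0 (never used below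
   in a relevant way) *)
Definition Rbar_plus (x y : Rbar) : Rbar :=
  match x, y with
  | Finite a, Finite b => Finite (a + b)
  | p_infty, m_infty | m_infty, p_infty => Finite 0
  | p_infty, _ | _, p_infty => p_infty
  | m_infty, _ | _, m_infty => m_infty
  end.

Definition Rbar_opp (x : Rbar) : Rbar :=
  match x with Finite a => Finite (- a) | p_infty => m_infty | m_infty => p_infty end.

Definition Rbar_minus (x y : Rbar) : Rbar := Rbar_plus x (Rbar_opp y).

(* multiplication by a real scalar, with 0 * (+-oo) = 0 *)
Definition Rbar_scal (c : R) (x : Rbar) : Rbar :=
  match x with
  | Finite a => Finite (c * a)
  | p_infty => if Rlt_dec 0 c then p_infty else if Rlt_dec c 0 then m_infty else Finite 0
  | m_infty => if Rlt_dec 0 c then m_infty else if Rlt_dec c 0 then p_infty else Finite 0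
  end.

Definition Rbar_max (x y : Rbar) : Rbar :=
  if excluded_middle_informative (Rbar_le x y) then y else x.

Definition Rbar_is_glb (S : Rbar -> Prop) (l : Rbar) : Prop :=
  (forall x, S x -> Rbar_le l x) /\
  (forall m, (forall x, S x -> Rbar_le m x) -> Rbar_le m l).
Definition Rbar_is_lub (S : Rbar -> Prop) (l : Rbar) : Prop :=
  (forall x, S x -> Rbar_le x l) /\
  (forall m, (forall x, S x -> Rbar_le x m) -> Rbar_le l m).

(* inf / sup (they always exist in the extended reals) *)
Definition Rbar_inf (S : Rbar -> Prop) : Rbar :=
  epsilon (inhabits p_infty) (Rbar_is_glb S).
Definition Rbar_sup (S : Rbar -> Prop) : Rbar :=
  epsilon (inhabits m_infty) (Rbar_is_lub S).

Definition Rbar_is_lim (u : nat -> Rbar) (l : Rbar) : Prop :=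
  match l with
  | Finite a => forall eps, 0 < eps -> exists N, forall n, (N <= n)%nat ->
                  exists r, u n = Finite r /\ Rabs (r - a) < eps
  | p_infty => forall M, exists N, forall n, (N <= n)%nat -> Rbar_le (Finite M) (u n)
  | m_infty => forall M, exists N, forall n, (N <= n)%nat -> Rbar_le (u n) (Finite M)
  end.

Definition Rbar_lim (u : nat -> Rbar) : Rbar :=
  epsilon (inhabits p_infty) (Rbar_is_lim u).

Fixpoint Rbar_sum (f : nat -> Rbar) (n : nat) : Rbar :=
  match n with
  | O => Finite 0
  | S k => Rbar_plus (Rbar_sum f k) (f k)
  end.

Definition Rbar_series (f : nat -> Rbar) : Rbar := Rbar_lim (Rbar_sum f).

Definition dom (J : R -> Rbar) (z : R) : Prop := J z <> p_infty.

Definition J_CB (J1 J2 : R -> Rbar) (z : R) : Rbar := Rbar_plus (J1 z) (J2 z).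

Definition J_0 (J1 J2 : R -> Rbar) (z : R) : Rbar :=
  Rbar_plus (J2 z)
    (Rbar_scal (1/2) (Rbar_inf (fun x => exists z1 z2, z1 + z2 = 2 * z /\
                                   x = Rbar_plus (J1 z1) (J1 z2)))).

(* J^** : Fenchel biconjugate = convex lower semicontinuous envelope,
   i.e. the supremum of the affine minorants *)
Definition biconj (J : R -> Rbar) (z : R) : Rbar :=
  Rbar_sup (fun x => exists a b, (forall y, Rbar_le (Finite (a * y + b)) (J y))
                                 /\ x = Finite (a * z + b)).

Definition affine_near (J : R -> Rbar) (z : R) : Prop :=
  exists d a b, 0 < d /\ forall x, Rabs (x - z) < d -> J x = Finite (a * x + b).

(* C^{1,alpha} on the domain (derivative locally alpha-Hoelder: Hoelder on
   every compact interval contained in the domain) *)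
Definition C1alpha_on_dom (J : R -> Rbar) (alpha : R) : Prop :=
  exists f f' : R -> R,
    (forall x, dom J x -> J x = Finite (f x)) /\
    (forall x, dom J x -> derivable_pt_lim f x (f' x)) /\
    (forall a b, a <= b -> (forall x, a <= x <= b -> dom J x) ->
       exists C, forall x y, a <= x <= b -> a <= y <= b -> x <> y ->
         Rabs (f' x - f' y) <= C * Rpower (Rabs (x - y)) alpha).

Definition C1_on_dom (J : R -> Rbar) : Prop :=
  exists f f' : R -> R,
    (forall x, dom J x -> J x = Finite (f x)) /\
    (forall x, dom J x -> derivable_pt_lim f x (f' x)) /\
    (forall x, dom J x -> forall eps, 0 < eps -> exists d, 0 < d /\
       forall y, dom J y -> Rabs (y - x) < d -> Rabs (f' y - f' x) < eps).

Definition lim_pinfty (J : R -> Rbar) (L : R) : Prop :=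
  forall eps, 0 < eps -> exists M, forall z, M < z ->
    exists r, J z = Finite r /\ Rabs (r - L) < eps.

Definition unique_argmin (J : R -> Rbar) (d : R) : Prop :=
  (forall z, Rbar_le (J d) (J z)) /\
  (forall z, (forall w, Rbar_le (J z) (J w)) -> z = d).

Definition Rbar_convex (P : R -> Rbar) : Prop :=
  forall x y t, 0 < t < 1 ->
    Rbar_le (P (t * x + (1 - t) * y))
            (Rbar_plus (Rbar_scal t (P x)) (Rbar_scal (1 - t) (P y))).

Definition strictly_convex_on (J : R -> Rbar) (D : R -> Prop) : Prop :=
  forall x y t, D x -> D y -> x <> y -> 0 < t < 1 ->
    Rbar_lt (J (t * x + (1 - t) * y))
            (Rbar_plus (Rbar_scal t (J x)) (Rbar_scal (1 - t) (J y))).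

Definition LJ1 (J1 J2 : R -> Rbar) : Prop :=
  forall z, J_0 J1 J2 z = biconj (J_0 J1 J2) z -> ~ affine_near (J_0 J1 J2) z.

(* read for z in dom J_0 *)
Definition LJ2 (J1 J2 : R -> Rbar) : Prop :=
  forall z, dom (J_0 J1 J2) z -> J_0 J1 J2 z = biconj (J_0 J1 J2) z ->
    exists z1 z2,
      (z1 + z2 = 2 * z /\
       J_0 J1 J2 z = Rbar_plus (J2 z) (Rbar_scal (1/2) (Rbar_plus (J1 z1) (J1 z2)))) /\
      forall w1 w2, w1 + w2 = 2 * z ->
       J_0 J1 J2 z = Rbar_plus (J2 z) (Rbar_scal (1/2) (Rbar_plus (J1 w1) (J1 w2))) ->
       w1 = z1 /\ w2 = z2.

Definition LJ3 (J1 J2 : R -> Rbar) (J0inf : R) : Prop :=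
  (exists alpha, 0 < alpha <= 1 /\ C1alpha_on_dom J1 alpha /\ C1alpha_on_dom J2 alpha) /\
  C1_on_dom (J_0 J1 J2) /\
  (forall z, dom J1 z <-> dom J2 z) /\
  (forall z, 0 < z -> dom J1 z) /\
  lim_pinfty J1 0 /\ lim_pinfty J2 0 /\
  lim_pinfty (J_0 J1 J2) J0inf.

Definition LJ4 (J1 J2 : R -> Rbar) (J0inf gamma : R) : Prop :=
  (exists (Psi : R -> Rbar) (c1 c2 : R),
     Rbar_convex Psi /\
     (forall z, Rbar_le (Finite 0) (Psi z)) /\
     (forall M, exists K, forall z, z < K -> Rbar_le (Finite (M * Rabs z)) (Psi z)) /\
     0 < c1 /\ 0 < c2 /\
     forall z, forall J, (J = J1 \/ J = J2) ->
       Rbar_le (Rbar_scal c1 (Rbar_minus (Psi z) (Finite 1))) (J z) /\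
       Rbar_le (J z) (Rbar_scal c2 (Rbar_max (Psi z) (Finite (Rabs z))))) /\
  (exists delta1 delta2, 0 < delta1 /\ 0 < delta2 /\
     unique_argmin J1 delta1 /\ unique_argmin J2 delta2 /\
     strictly_convex_on J1 (fun z => z < delta1 /\ dom J1 z) /\
     strictly_convex_on J2 (fun z => z < delta2 /\ dom J2 z)) /\
  0 < gamma /\ unique_argmin (J_0 J1 J2) gamma /\
  Rbar_lt (J_0 J1 J2 gamma) (Finite J0inf) /\
  (forall z, z <= gamma -> J_0 J1 J2 z = biconj (J_0 J1 J2) z).

Definition bl_term (J1 J2 : R -> Rbar) (gamma : R) (v : nat -> R) (i : nat) : Rbar :=
  Rbar_minus
    (Rbar_plus (J2 ((v (S (S i)) - v i) / 2))
       (Rbar_plus (Rbar_scal (1/2) (J1 (v (S (S i)) - v (S i))))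
                  (Rbar_scal (1/2) (J1 (v (S i) - v i)))))
    (J_0 J1 J2 gamma).

(* B(gamma); the inf over N of min over v is read as the inf over all (N, v) *)
Definition B (J1 J2 : R -> Rbar) (gamma : R) : Rbar :=
  Rbar_inf (fun x => exists (N : nat) (v : nat -> R),
    v O = 0 /\ (forall i, (N <= i)%nat -> v (S i) - v i = gamma) /\
    x = Rbar_plus (Rbar_scal (1/2) (J1 (v 1%nat - v O)))
                  (Rbar_series (bl_term J1 J2 gamma v))).

(* B_IF(m), m in N \cup {+oo}; None stands for +oo *)
Definition B_IF (J1 J2 : R -> Rbar) (gamma : R) (m : option nat) : Rbar :=
  match m with
  | None => B J1 J2 gamma
  | Some m =>
    Rbar_inf (fun x => exists (k : nat) (v : nat -> R),
      v O = 0 /\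
      x = Rbar_plus (Rbar_plus (Rbar_scal (1/2) (J1 (v 1%nat - v O)))
                               (Rbar_sum (bl_term J1 J2 gamma v) k))
                    (Rbar_scal ((2 * INR m + 1) / 2)
                       (Rbar_minus (J_CB J1 J2 (v (S k) - v k)) (J_0 J1 J2 gamma))))
  end.

Definition B_IJ (J1 J2 : R -> Rbar) (gamma : R) : Rbar :=
  Rbar_minus (Rbar_scal 2 (B J1 J2 gamma)) (Rbar_scal 2 (J_0 J1 J2 gamma)).

(* B_AIF(n), n in {1,2,...} \cup {+oo} (None = +oo, +oo - 1 = +oo);
   only used for n >= 1 *)
Definition B_AIF (J1 J2 : R -> Rbar) (gamma : R) (n : option nat) : Rbar :=
  let m := match n with None => None | Some n => Some (n - 1)%nat end in
  Rbar_minus (Rbar_plus (B_IF J1 J2 gamma m) (B J1 J2 gamma))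
             (Rbar_scal 2 (J_0 J1 J2 gamma)).

Definition Rfun (J1 J2 : R -> Rbar) (gamma t : R) : Rbar :=
  Rbar_minus
    (Rbar_minus (Rbar_plus (J2 ((gamma + t) / 2))
                           (Rbar_scal (1/2) (Rbar_plus (J1 gamma) (J1 t))))
                (J_0 J1 J2 gamma))
    (Rbar_scal (3/2) (Rbar_minus (J_CB J1 J2 t) (J_0 J1 J2 gamma))).

(* Main.v *)
Require Import Defs.
From Stdlib Require Import Reals Lra Lia Classical ClassicalEpsilon Arith.
Open Scope R_scope.

Lemma Rbar_le_antisym a b : Rbar_le a b -> Rbar_le b a -> a = b.
Proof. destruct a, b; simpl; intros H1 H2; try contradiction; try reflexivity; f_equal; lra. Qed.

Lemma Rbar_le_trans a b c : Rbar_le a b -> Rbar_le b c -> Rbar_le a c.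
Proof. destruct a, b, c; simpl; intros; try tauto; lra. Qed.

Lemma glb_exists (S : Rbar -> Prop) : exists l, Rbar_is_glb S l.
Proof.
  destruct (classic (S m_infty)) as [Hm|Hm].
  { exists m_infty; split; [intros; exact I|]. intros m Hmb. apply Hmb; exact Hm. }
  destruct (classic (exists r, S (Finite r))) as [[r0 Hr0]|Hnf].
  - destruct (classic (exists b, forall r, S (Finite r) -> b <= r)) as [[b Hb]|Hnb].
    + set (E := fun y => S (Finite (- y))).
      assert (HE : bound E).
      { exists (-b). intros y Hy. unfold E in Hy. specialize (Hb _ Hy). lra. }
      assert (HE2 : exists y, E y).
      { exists (- r0). unfold E. rewrite Ropp_involutive. exact Hr0. }
      destruct (completeness E HE HE2) as [L [HL1 HL2]].
      exists (Finite (- L)). split.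
      * intros [r| |] Hx; simpl.
        -- assert (E (-r)) by (unfold E; rewrite Ropp_involutive; exact Hx).
           specialize (HL1 _ H). lra.
        -- exact I.
        -- contradiction.
      * intros [c| |] Hm'; simpl.
        -- assert (L <= -c).
           { apply HL2. intros y Hy. specialize (Hm' _ Hy). simpl in Hm'. lra. }
           lra.
        -- specialize (Hm' _ Hr0). simpl in Hm'. exact Hm'.
        -- exact I.
    + exists m_infty. split; [intros; exact I|].
      intros [c| |] Hm'; simpl.
      * apply Hnb. exists c. intros r Hr. exact (Hm' _ Hr).
      * exact (Hm' _ Hr0).
      * exact I.
  - exists p_infty. split.
    + intros [r| |] Hx; simpl; auto. apply Hnf; eauto.
    + intros [c| |] _; simpl; auto.
Qed.

Lemma inf_glb S : Rbar_is_glb S (Rbar_inf S).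
Proof. unfold Rbar_inf. apply epsilon_spec. apply glb_exists. Qed.

Lemma lim_evconst (u : nat -> Rbar) N c :
  (forall n, (N <= n)%nat -> u n = c) -> Rbar_lim u = c.
Proof.
  intros Hu.
  assert (Hex : exists l, Rbar_is_lim u l).
  { exists c. destruct c as [a| |]; simpl.
    - intros eps He. exists N. intros n Hn. exists a. split; [apply Hu; auto|].
      replace (a - a) with 0 by ring. rewrite Rabs_R0. auto.
    - intros M. exists N. intros n Hn. rewrite Hu; simpl; auto.
    - intros M. exists N. intros n Hn. rewrite Hu; simpl; auto. }
  pose proof (epsilon_spec (inhabits p_infty) (Rbar_is_lim u) Hex) as Hl.
  fold (Rbar_lim u) in Hl.
  set (l := Rbar_lim u) in *. clearbody l.
  destruct l as [a| |]; simpl in Hl.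
  - destruct c as [r1| |].
    + destruct (Req_dec a r1) as [->|Hne]; [reflexivity|].
      exfalso.
      assert (Hp : 0 < Rabs (r1 - a)) by (apply Rabs_pos_lt; lra).
      destruct (Hl _ Hp) as [N' HN'].
      destruct (HN' (max N N') ltac:(lia)) as [r [Hr Hr2]].
      rewrite Hu in Hr by lia. injection Hr as ->. lra.
    + exfalso. destruct (Hl 1 ltac:(lra)) as [N' HN'].
      destruct (HN' (max N N') ltac:(lia)) as [r [Hr _]].
      rewrite Hu in Hr by lia. discriminate.
    + exfalso. destruct (Hl 1 ltac:(lra)) as [N' HN'].
      destruct (HN' (max N N') ltac:(lia)) as [r [Hr _]].
      rewrite Hu in Hr by lia. discriminate.
  - destruct c as [r1| |]; [exfalso| reflexivity| exfalso].
    + destruct (Hl (r1 + 1)) as [N' HN']. specialize (HN' (max N N') ltac:(lia)).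
      rewrite Hu in HN' by lia. simpl in HN'. lra.
    + destruct (Hl 0) as [N' HN']. specialize (HN' (max N N') ltac:(lia)).
      rewrite Hu in HN' by lia. simpl in HN'. exact HN'.
  - destruct c as [r1| |]; [exfalso| exfalso| reflexivity].
    + destruct (Hl (r1 - 1)) as [N' HN']. specialize (HN' (max N N') ltac:(lia)).
      rewrite Hu in HN' by lia. simpl in HN'. lra.
    + destruct (Hl 0) as [N' HN']. specialize (HN' (max N N') ltac:(lia)).
      rewrite Hu in HN' by lia. simpl in HN'. exact HN'.
Qed.

Lemma plus_0r x : Rbar_plus x (Finite 0) = x.
Proof. destruct x; simpl; try rewrite Rplus_0_r; reflexivity. Qed.

Lemma plus_comm x y : Rbar_plus x y = Rbar_plus y x.
Proof. destruct x, y; simpl; try rewrite Rplus_comm; reflexivity. Qed.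

Lemma plus_self x : Rbar_plus x x = Rbar_scal 2 x.
Proof.
  destruct x; simpl; try (f_equal; ring);
  destruct (Rlt_dec 0 2); try reflexivity; lra.
Qed.

Lemma nm_plus x y : x <> m_infty -> y <> m_infty -> Rbar_plus x y <> m_infty.
Proof. destruct x, y; simpl; congruence. Qed.

Lemma nm_scal c x : 0 < c -> x <> m_infty -> Rbar_scal c x <> m_infty.
Proof. intros Hc. destruct x; simpl; try congruence. destruct (Rlt_dec 0 c); [congruence|lra]. Qed.

Lemma scal_pinf c : 0 < c -> Rbar_scal c p_infty = p_infty.
Proof. intros Hc; simpl. destruct (Rlt_dec 0 c); [reflexivity|lra]. Qed.

Lemma plus_pinf_l x : x <> m_infty -> Rbar_plus p_infty x = p_infty.
Proof. destruct x; simpl; congruence. Qed.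

Lemma plus_pinf_r x : x <> m_infty -> Rbar_plus x p_infty = p_infty.
Proof. destruct x; simpl; congruence. Qed.

Lemma sum_stable f N : (forall i, (N <= i)%nat -> f i = Finite 0) ->
  forall n, (N <= n)%nat -> Rbar_sum f n = Rbar_sum f N.
Proof.
  intros Hf n Hn. induction Hn; [reflexivity|]. simpl.
  rewrite Hf by lia. rewrite plus_0r. exact IHHn.
Qed.

Lemma series_stable f N : (forall i, (N <= i)%nat -> f i = Finite 0) ->
  Rbar_series f = Rbar_sum f N.
Proof. intros. unfold Rbar_series. apply (lim_evconst _ N). apply sum_stable; auto. Qed.

Lemma sum_ext f g n : (forall i, (i < n)%nat -> f i = g i) -> Rbar_sum f n = Rbar_sum g n.
Proof.
  induction n; intros H; simpl; auto.
  rewrite IHn by (intros; apply H; lia). rewrite H by lia. reflexivity.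
Qed.

Lemma nm_sum f n : (forall i, f i <> m_infty) -> Rbar_sum f n <> m_infty.
Proof. intros H. induction n; simpl; [discriminate|]. apply nm_plus; auto. Qed.

Fixpoint ext (v : nat -> R) (k : nat) (gamma : R) (n : nat) : R :=
  match n with
  | O => v O
  | S i => if le_dec i k then v (S i) else ext v k gamma i + gamma
  end.

Lemma ext_agree v k gamma j : (j <= S k)%nat -> ext v k gamma j = v j.
Proof. destruct j; simpl; auto. intros. destruct (le_dec j k); [reflexivity|lia]. Qed.

Lemma ext_tail v k gamma i : (k < i)%nat -> ext v k gamma (S i) = ext v k gamma i + gamma.
Proof. intros. simpl. destruct (le_dec i k); [lia|reflexivity]. Qed.

Lemma bl_zero J1 J2 gamma g g1 g2 v i :
  J_0 J1 J2 gamma = Finite g -> J1 gamma = Finite g1 -> J2 gamma = Finite g2 -> g = g1 + g2 ->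
  v (S i) - v i = gamma -> v (S (S i)) - v (S i) = gamma ->
  bl_term J1 J2 gamma v i = Finite 0.
Proof.
  intros H0 H1 H2 Hg Ha Hb. unfold bl_term.
  replace ((v (S (S i)) - v i) / 2) with gamma by lra.
  rewrite Ha, Hb, H0, H1, H2. simpl. f_equal. lra.
Qed.

Lemma nm_bl J1 J2 gamma g v i :
  (forall z, J1 z <> m_infty) -> (forall z, J2 z <> m_infty) ->
  J_0 J1 J2 gamma = Finite g -> bl_term J1 J2 gamma v i <> m_infty.
Proof.
  intros HJ1 HJ2 H0. unfold bl_term, Rbar_minus. rewrite H0.
  apply nm_plus; [|discriminate].
  apply nm_plus; auto. apply nm_plus; apply nm_scal; auto; lra.
Qed.

Lemma BIF_eq J1 J2 gamma g g1 g2 (m : nat) :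
  (forall z, J1 z <> m_infty) -> (forall z, J2 z <> m_infty) ->
  (forall z, dom J1 z <-> dom J2 z) ->
  J_0 J1 J2 gamma = Finite g -> J1 gamma = Finite g1 -> J2 gamma = Finite g2 -> g = g1 + g2 ->
  (forall t a1 a2, J1 t = Finite a1 -> J2 t = Finite a2 -> g <= a1 + a2) ->
  (forall t, dom J1 t -> Rbar_le (Rfun J1 J2 gamma t) (Finite 0)) ->
  (1 <= m)%nat ->
  B_IF J1 J2 gamma (Some m) = B J1 J2 gamma.
Proof.
  intros HJ1 HJ2 Hdom H0 H1 H2 Hg Hge HR Hm.
  assert (Hc : 3/2 <= (2 * INR m + 1) / 2).
  { apply le_INR in Hm. simpl in Hm. lra. }
  unfold B_IF, B.
  match goal with |- Rbar_inf ?S1 = Rbar_inf ?S2 =>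
    destruct (inf_glb S1) as [L1 G1]; destruct (inf_glb S2) as [L2 G2] end.
  apply Rbar_le_antisym.
  - apply G2. intros x [N [v [Hv0 [Ht Hx]]]].
    apply L1. exists N, v. split; [exact Hv0|]. rewrite Hx.
    rewrite (series_stable _ N).
    2:{ intros i Hi. apply (bl_zero _ _ _ g g1 g2); auto; apply Ht; lia. }
    rewrite (Ht N) by lia. unfold J_CB. rewrite H0, H1, H2.
    replace (Rbar_scal ((2 * INR m + 1) / 2)
        (Rbar_minus (Rbar_plus (Finite g1) (Finite g2)) (Finite g))) with (Finite 0).
    + rewrite plus_0r. reflexivity.
    + simpl. f_equal. rewrite Hg. ring.
  - apply G1. intros x [k [v [Hv0 Hx]]]. subst x.
    remember (v (S k) - v k) as t eqn:Htdef.
    assert (HPQ : Rbar_plus (Rbar_scal (1/2) (J1 (v 1%nat - v 0%nat)))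
                    (Rbar_sum (bl_term J1 J2 gamma v) k) <> m_infty).
    { apply nm_plus. apply nm_scal; auto; lra. apply nm_sum. intros; eapply nm_bl; eauto. }
    destruct (J1 t) as [a1| |] eqn:E1; [| | exfalso; exact (HJ1 _ E1)].
    2:{ unfold J_CB. rewrite E1, plus_pinf_l by auto. rewrite H0. simpl Rbar_minus.
        rewrite scal_pinf by lra. rewrite plus_pinf_r by auto.
        match goal with |- Rbar_le ?a p_infty => destruct a; exact I end. }
    assert (Hdt : dom J1 t) by (unfold dom; rewrite E1; discriminate).
    assert (Hdt2 := proj1 (Hdom t) Hdt). unfold dom in Hdt2.
    destruct (J2 t) as [a2| |] eqn:E2; [| contradiction | exfalso; exact (HJ2 _ E2)].
    pose proof (HR t Hdt) as HRt. unfold Rfun, J_CB, Rbar_minus in HRt.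
    rewrite H1, E1, E2, H0 in HRt.
    destruct (J2 ((gamma + t) / 2)) as [h| |] eqn:E3;
      [| simpl in HRt; contradiction | exfalso; exact (HJ2 _ E3)].
    simpl in HRt.
    pose proof (Hge t a1 a2 E1 E2) as Hga.
    set (w := ext v k gamma).
    eapply Rbar_le_trans.
    { apply L2. exists (S k), w. split; [unfold w; rewrite ext_agree by lia; exact Hv0|].
      split; [intros i Hi; unfold w; rewrite ext_tail by lia; ring|]. reflexivity. }
    rewrite (series_stable _ (S k)).
    2:{ intros i Hi. apply (bl_zero _ _ _ g g1 g2); auto; unfold w;
        rewrite ext_tail by lia; ring. }
    cbn [Rbar_sum].
    rewrite (sum_ext _ (bl_term J1 J2 gamma v)).
    2:{ intros i Hi. unfold bl_term, w. rewrite !ext_agree by lia. reflexivity. }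
    assert (Hb : bl_term J1 J2 gamma w k = Finite (h + (1/2*g1 + 1/2*a1) + - g)).
    { unfold bl_term, w. rewrite ext_tail by lia. rewrite !ext_agree by lia.
      replace ((v (S k) + gamma - v k) / 2) with ((gamma + t) / 2) by lra.
      replace (v (S k) + gamma - v (S k)) with gamma by ring.
      rewrite <- Htdef, E3, H1, E1, H0. reflexivity. }
    rewrite Hb. unfold w. rewrite !ext_agree by lia.
    unfold J_CB. rewrite E1, E2, H0.
    set (c := (2 * INR m + 1) / 2) in *.
    assert (Hcd : 3/2 * (a1 + a2 + - g) <= c * (a1 + a2 + - g))
      by (apply Rmult_le_compat_r; lra).
    destruct (Rbar_scal (1/2) (J1 (v 1%nat - v 0%nat))) as [p| |] eqn:EP;
    destruct (Rbar_sum (bl_term J1 J2 gamma v) k) as [q| |] eqn:EQ;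
    simpl in HPQ |- *; try contradiction; auto; try lra.
Qed.

Theorem lemma5p4 (J1 J2 : R -> Rbar) (J0inf gamma : R) :
  (forall z, J1 z <> m_infty) -> (forall z, J2 z <> m_infty) ->
  LJ1 J1 J2 -> LJ2 J1 J2 -> LJ3 J1 J2 J0inf -> LJ4 J1 J2 J0inf gamma ->
  (forall t, dom J1 t -> Rbar_le (Rfun J1 J2 gamma t) (Finite 0)) ->
  (forall m : nat, (1 <= m)%nat -> B_IF J1 J2 gamma (Some m) = B J1 J2 gamma) /\
  B_IF J1 J2 gamma None = B J1 J2 gamma /\
  (forall n : nat, (2 <= n)%nat -> B_AIF J1 J2 gamma (Some n) = B_IJ J1 J2 gamma) /\
  B_AIF J1 J2 gamma None = B_IJ J1 J2 gamma.
Proof.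
  intros HJ1 HJ2 _ HL2 HL3 HL4 HR.
  destruct HL3 as [_ [_ [Hdom _]]].
  destruct HL4 as [_ [_ [_ [[Harg1 _] [Hlt Hbic]]]]].
  assert (Hd0 : dom (J_0 J1 J2) gamma).
  { unfold dom. intro E. rewrite E in Hlt. simpl in Hlt. exact Hlt. }
  destruct (HL2 gamma Hd0 (Hbic gamma (Rle_refl _))) as [z1 [z2 [[Hs He] Hu]]].
  destruct (Hu z2 z1) as [E21 E12].
  { lra. }
  { rewrite (plus_comm (J1 z2)). exact He. }
  assert (z1 = gamma) by lra. assert (z2 = gamma) by lra. subst z1 z2.
  destruct (J1 gamma) as [g1| |] eqn:H1; [| | exfalso; exact (HJ1 _ H1)].
  2:{ exfalso. apply Hd0. rewrite He. change (Rbar_plus p_infty p_infty) with p_infty. rewrite scal_pinf by lra.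
      apply plus_pinf_r; auto. }
  destruct (J2 gamma) as [g2| |] eqn:H2; [| | exfalso; exact (HJ2 _ H2)].
  2:{ exfalso. apply Hd0. rewrite He. apply plus_pinf_l. simpl. discriminate. }
  set (g := g2 + 1/2 * (g1 + g1)).
  assert (HJ0 : J_0 J1 J2 gamma = Finite g) by (rewrite He; reflexivity).
  assert (Hg : g = g1 + g2) by (unfold g; lra).
  clearbody g.
  assert (Hge : forall t a1 a2, J1 t = Finite a1 -> J2 t = Finite a2 -> g <= a1 + a2).
  { intros t a1 a2 E1 E2. pose proof (Harg1 t) as Ht. rewrite HJ0 in Ht.
    unfold J_0 in Ht. rewrite E2 in Ht.
    match type of Ht with context [Rbar_inf ?S] =>
      destruct (inf_glb S) as [L _];
      assert (Hl : Rbar_le (Rbar_inf S) (Finite (a1 + a1)));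
      [ | destruct (Rbar_inf S) ] end.
    - replace (Finite (a1 + a1)) with (Rbar_plus (J1 t) (J1 t)) by (rewrite E1; reflexivity).
      apply L. exists t, t. split; [ring|reflexivity].
    - simpl in *. lra.
    - simpl in Hl. contradiction.
    - simpl in Ht. destruct (Rlt_dec 0 (1/2)); [|lra]. simpl in Ht. contradiction. }
  assert (HB : forall m, (1 <= m)%nat -> B_IF J1 J2 gamma (Some m) = B J1 J2 gamma).
  { intros m Hm. apply (BIF_eq _ _ _ g g1 g2); auto. }
  split; [exact HB|]. split; [reflexivity|]. split.
  - intros n Hn. unfold B_AIF, B_IJ. rewrite HB by lia. rewrite plus_self. reflexivity.
  - unfold B_AIF, B_IJ. simpl. rewrite plus_self. reflexivity.
Qed.
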